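(* Let $\langle X, d\rangle$ be a metric space with completion $\langle \widehat{X},\widehat{d}\rangle$. The following conditions are equivalent: (1) $\langle \widehat{X},\widehat{d}\rangle$ is cofinally Bourbaki quasi-complete; (2) $X$ (with its own metric $d$) is strongly uniformly locally bounded and, for every metric space $\langle Y,\rho\rangle$, every Cauchy-Lipschitz function $f:X\to Y$ is strongly uniformly locally Lipschitz; (3) $X$ is strongly uniformly locally bounded and every real-valued Cauchy-Lipschitz function on $X$ is strongly uniformly locally Lipschitz; (4) $X$ is strongly uniformly locally bounded and the real-valued strongly uniformly locally Lipschitz functions on $X$ are uniformly dense in $CC(X,\mathbb{R})$, the space of real-valued Cauchy-continuous functions on $X$.
   Context: For $\varepsilon>0$ and $x,y$ in a metric space $\langle Z,d\rangle$, an $\varepsilon$-chain from $x$ to $y$ is a finite sequence $x=x_0,\dots,x_n=y$ in $Z$ with $d(x_{i-1},x_i)<\varepsilon$ for all $i$. The $\varepsilon$-chainable component $S^\infty_d(x,\varepsilon)$ is the set of points of $Z$ joinable to $x$ by an $\varepsilon$-chain. A sequence $\langle x_n\rangle$ is cofinally Bourbaki quasi-Cauchy if for every $\varepsilon>0$ there is an infinite $N_\varepsilon\subseteq\mathbb{N}$ such that for all $j,k\in N_\varepsilon$, $x_j$ and $x_k$ can be joined by an $\varepsilon$-chain; $Z$ is cofinally Bourbaki quasi-complete if every such sequence has a cluster point. $Z$ is strongly uniformly locally bounded if there is $\delta>0$ with $S^\infty_d(x,\delta)$ bounded for every $x\in Z$. A function $f:X\to Y$ is Cauchy-Lipschitz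 if $f$ is Lipschitz on the range of every Cauchy sequence in $X$; it is Cauchy-continuous if it maps Cauchy sequences to Cauchy sequences; it is strongly uniformly locally Lipschitz (uniformly locally chain-Lipschitz) if there is $\delta>0$ such that for every $x\in X$ the restriction of $f$ to $S^\infty_d(x,\delta)$ is Lipschitz (constant may depend on $x$). Uniform density refers to the sup-norm (uniform convergence). *)

(* Defs.v *)
From Stdlib Require Import Reals Lra.
Open Scope R_scope.

Record MetricSpace := {
  carrier :> Type;
  dist : carrier -> carrier -> R;
  dist_ge0 : forall x y, 0 <= dist x y;
  dist_eq0 : forall x y, dist x y = 0 <-> x = y;
  dist_sym : forall x y, dist x y = dist y x;
  dist_tri : forall x y z, dist x z <= dist x y + dist y z
}.

Arguments dist {m} _ _.

Lemma Rdist_ge0 (x y : R) : 0 <= Rabs (x - y).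
Proof. apply Rabs_pos. Qed.
Lemma Rdist_eq0 (x y : R) : Rabs (x - y) = 0 <-> x = y.
Proof.
  split; intro H.
  - destruct (Req_dec (x - y) 0) as [E|E]; [lra|].
    exfalso; apply (Rabs_no_R0 _ E); exact H.
  - subst; rewrite Rminus_diag; apply Rabs_R0.
Qed.
Lemma Rdist_sym (x y : R) : Rabs (x - y) = Rabs (y - x).
Proof. apply Rabs_minus_sym. Qed.
Lemma Rdist_tri (x y z : R) : Rabs (x - z) <= Rabs (x - y) + Rabs (y - z).
Proof.
  replace (x - z) with ((x - y) + (y - z)) by ring. apply Rabs_triang.
Qed.
Definition RealLine : MetricSpace :=
  {| carrier := R; dist := fun x y => Rabs (x - y);
     dist_ge0 := Rdist_ge0; dist_eq0 := Rdist_eq0;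
     dist_sym := Rdist_sym; dist_tri := Rdist_tri |}.

Section Defs.
Context {X : MetricSpace}.

Inductive chain (eps : R) : X -> X -> Prop :=
  | chain_refl x : chain eps x x
  | chain_step x y z : dist x y < eps -> chain eps y z -> chain eps x z.

Definition chain_component (x : X) (eps : R) : X -> Prop := fun z => chain eps x z.

Definition bounded_set (A : X -> Prop) : Prop :=
  exists x0 M, forall a, A a -> dist x0 a <= M.

Definition infinite_nat (N : nat -> Prop) : Prop :=
  forall m, exists n, (m <= n)%nat /\ N n.

Definition cofinally_BQC (x : nat -> X) : Prop :=
  forall eps, 0 < eps -> exists N : nat -> Prop, infinite_nat N /\
    forall j k, N j -> N k -> chain eps (x j) (x k).

Definition cluster_point (x : nat -> X) (p : X) : Prop :=
  forall eps, 0 < eps -> forall m, exists n, (m <= n)%nat /\ dist (x n) p < eps.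

Definition cofinally_BQ_complete : Prop :=
  forall x : nat -> X, cofinally_BQC x -> exists p, cluster_point x p.

Definition strongly_ULB : Prop :=
  exists delta, 0 < delta /\ forall x, bounded_set (chain_component x delta).

Definition cauchy_seq (x : nat -> X) : Prop :=
  forall eps, 0 < eps -> exists N, forall m n, (N <= m)%nat -> (N <= n)%nat ->
    dist (x m) (x n) < eps.

Definition complete : Prop :=
  forall x : nat -> X, cauchy_seq x ->
    exists p, forall eps, 0 < eps -> exists N, forall n, (N <= n)%nat -> dist (x n) p < eps.

End Defs.

Arguments cofinally_BQ_complete : clear implicits.
Arguments strongly_ULB : clear implicits.
Arguments complete : clear implicits.

Section Funs.
Context {X Y : MetricSpace}.

Definition lipschitz_on (f : X -> Y) (A : X -> Prop) : Prop :=
  exists K, forall a b, A a -> A b -> dist (f a) (f b) <= K * dist a b.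

Definition cauchy_lipschitz (f : X -> Y) : Prop :=
  forall x : nat -> X, cauchy_seq x -> lipschitz_on f (fun a => exists n, a = x n).

Definition cauchy_continuous (f : X -> Y) : Prop :=
  forall x : nat -> X, cauchy_seq x -> cauchy_seq (fun n => f (x n)).

Definition strongly_ULL (f : X -> Y) : Prop :=
  exists delta, 0 < delta /\ forall x, lipschitz_on f (chain_component x delta).

Definition isometry (i : X -> Y) : Prop :=
  forall a b, dist (i a) (i b) = dist a b.

Definition dense_range (i : X -> Y) : Prop :=
  forall y : Y, forall eps, 0 < eps -> exists a, dist (i a) y < eps.

Definition is_completion (i : X -> Y) : Prop :=
  complete Y /\ isometry i /\ dense_range i.
End Funs.

Definition SULL_uniformly_dense_in_CC (X : MetricSpace) : Prop :=
  forall g : X -> RealLine, cauchy_continuous g ->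
    forall eps, 0 < eps -> exists f : X -> RealLine, strongly_ULL f /\
      forall x, Rabs (f x - g x) <= eps.

(* Main.v *)
From Stdlib Require Import Reals Lra Lia ZArith Classical FunctionalExtensionality PropExtensionality IndefiniteDescription.
Require Import Defs.
Open Scope R_scope.

Lemma chain_trans (X : MetricSpace) e (a b c : X) : chain e a b -> chain e b c -> chain e a c.
Proof. induction 1; intros; auto. eapply chain_step; eauto. Qed.

Lemma chain_snoc (X : MetricSpace) e (a b c : X) : chain e a b -> dist b c < e -> chain e a c.
Proof. intros H Hd. apply chain_trans with b; auto. eapply chain_step; eauto. constructor. Qed.

Lemma chain_sym (X : MetricSpace) e (a b : X) : chain e a b -> chain e b a.
Proof. induction 1. constructor. apply chain_snoc with y; auto. rewrite dist_sym; auto. Qed.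

Lemma chain_mono (X : MetricSpace) e e' (a b : X) : e <= e' -> chain e a b -> chain e' a b.
Proof. intros He. induction 1. constructor. eapply chain_step; eauto. lra. Qed.

Lemma chain_map (X Y : MetricSpace) (i : X -> Y) e (a b : X) :
  isometry i -> chain e a b -> chain e (i a) (i b).
Proof. intros Hi. induction 1. constructor. eapply chain_step; eauto. rewrite Hi; auto. Qed.

Lemma chain_pull (X Y : MetricSpace) (i : X -> Y) e : 0 < e -> dense_range i -> isometry i ->
  forall z w, chain e z w -> exists eta, 0 < eta /\ forall a b, dist (i a) z < eta -> dist (i b) w < eta -> chain e a b.
Proof.
  intros He Hd Hi z w H. induction H as [z|z y w Hzy Hc IH].
  - exists (e/2). split. lra. intros a b Ha Hb. eapply chain_step; [|constructor].
    rewrite <- Hi. pose proof (dist_tri _ (i a) z (i b)). rewrite (dist_sym _ z (i b)) in H. lra.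
  - destruct IH as [eta [Heta IH]].
    set (s := Rmin eta ((e - dist z y)/2)).
    assert (Hs : 0 < s). { unfold s. apply Rmin_glb_lt; lra. }
    assert (Hs1 : s <= eta) by apply Rmin_l.
    assert (Hs2 : s <= (e - dist z y)/2) by apply Rmin_r.
    exists s. split; auto. intros a b Ha Hb.
    destruct (Hd y s Hs) as [c Hc'].
    eapply chain_step with c.
    + rewrite <- Hi. pose proof (dist_tri _ (i a) z (i c)). pose proof (dist_tri _ z y (i c)).
      rewrite (dist_sym _ y (i c)) in H0. lra.
    + apply IH; lra.
Qed.

Lemma nat_gt (r : R) : exists n : nat, r < INR n.
Proof.
  destruct (archimed r) as [H _].
  destruct (Z_lt_le_dec (up r) 0) as [Hn|Hp].
  - exists 0%nat. simpl. apply IZR_lt in Hn. lra.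
  - exists (Z.to_nat (up r)). rewrite INR_IZR_INZ, Z2Nat.id; auto.
Qed.

Lemma invS_pos (j : nat) : 0 < / INR (S j).
Proof. apply Rinv_0_lt_compat. apply lt_0_INR. lia. Qed.

Lemma invS_le (j k : nat) : (j <= k)%nat -> / INR (S k) <= / INR (S j).
Proof. intros H. apply Rinv_le_contravar. apply lt_0_INR; lia. apply le_INR; lia. Qed.

Lemma invS_small (e : R) : 0 < e -> exists m, / INR (S m) < e.
Proof.
  intros He. destruct (nat_gt (/ e)) as [m Hm]. exists m.
  rewrite S_INR. assert (0 < INR m) by (pose proof (Rinv_0_lt_compat e He); lra).
  rewrite <- (Rinv_inv e). apply Rinv_lt_contravar. apply Rmult_lt_0_compat; auto; try lra.
  apply Rinv_0_lt_compat; auto. lra.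
Qed.

Definition sig_ (n : nat) : nat := (n - Nat.sqrt n * Nat.sqrt n)%nat.

Lemma sig_inf (m m0 : nat) : exists n, (m0 <= n)%nat /\ sig_ n = m.
Proof.
  set (k := (m + m0)%nat). exists (k * k + m)%nat. split. nia.
  unfold sig_. rewrite (Nat.sqrt_unique (k*k+m) k). lia. nia.
Qed.

Lemma interleave_even (X : Type) (u v : nat -> X) j :
  (fun n => if Nat.even n then u (Nat.div2 n) else v (Nat.div2 n)) (2*j)%nat = u j.
Proof. cbv beta. rewrite Nat.even_mul. simpl (Nat.even 2). simpl orb. rewrite Nat.div2_double. auto. Qed.

Lemma interleave_odd (X : Type) (u v : nat -> X) j :
  (fun n => if Nat.even n then u (Nat.div2 n) else v (Nat.div2 n)) (S (2*j))%nat = v j.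
Proof. cbv beta. rewrite Nat.even_succ, Nat.odd_mul. simpl (Nat.odd 2). simpl andb. rewrite Nat.div2_succ_double. auto. Qed.

Lemma GL (X Xh : MetricSpace) (i : X -> Xh) (Bad : nat -> X -> X -> Prop) :
  isometry i -> cofinally_BQ_complete Xh ->
  (forall t a b, Bad t a b -> dist a b < / INR (S t)) ->
  (forall m : nat, exists xm : X, forall t, exists a b,
      chain (/ INR (S m)) xm a /\ chain (/ INR (S m)) xm b /\ Bad t a b) ->
  exists (w : nat -> X) (tau : nat -> nat), cauchy_seq w /\
    forall j, (j <= tau j)%nat /\ Bad (tau j) (w (2*j)%nat) (w (S (2*j))).
Proof.
  intros Hi HP HB Hm.
  destruct (functional_choice _ Hm) as [xm Hxm].
  assert (H2 : forall p : nat * nat, exists ab : X * X,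
     chain (/ INR (S (fst p))) (xm (fst p)) (fst ab) /\ chain (/ INR (S (fst p))) (xm (fst p)) (snd ab)
     /\ Bad (snd p) (fst ab) (snd ab)).
  { intros [m t]. destruct (Hxm m t) as [a [b H]]. exists (a,b). exact H. }
  destruct (functional_choice _ H2) as [AB HAB]. clear H2.
  set (z := fun n => i (fst (AB (sig_ n, n)))).
  destruct (HP z) as [p Hp].
  { intros eps Heps. destruct (invS_small eps Heps) as [m Hm']. exists (fun n => sig_ n = m).
    split.
    - intros m0. destruct (sig_inf m m0) as [n Hn]. exists n. exact Hn.
    - intros j k Hj Hk. unfold z. apply chain_mono with (/ INR (S m)). lra.
      apply chain_map; auto. rewrite Hj, Hk.
      destruct (HAB (m, j)) as [Ha _]. destruct (HAB (m,k)) as [Hb _]. simpl in *.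
      apply chain_trans with (xm m); auto. apply chain_sym; auto. }
  assert (Hc : forall q : nat * nat, exists n, (snd q <= n)%nat /\ dist (z n) p < / INR (S (fst q))).
  { intros [j m]. simpl. apply Hp. apply invS_pos. }
  destruct (functional_choice _ Hc) as [c Hc']. clear Hc.
  set (tau := nat_rect (fun _ => nat) (c (0,0)%nat) (fun j r => c (S j, S r))).
  assert (Htau : forall j, (j <= tau j)%nat /\ dist (z (tau j)) p < / INR (S j)).
  { induction j as [|j IH].
    - simpl. split. lia. apply (Hc' (0,0)%nat).
    - destruct (Hc' (S j, S (tau j))) as [H1 H2]. simpl in *. split; [lia|exact H2]. }
  set (u := fun j => fst (AB (sig_ (tau j), tau j))).
  set (v := fun j => snd (AB (sig_ (tau j), tau j))).
  set (w := fun n => if Nat.even n then u (Nat.div2 n) else v (Nat.div2 n)).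
  assert (Huv : forall j, Bad (tau j) (u j) (v j)).
  { intros j. unfold u, v. destruct (HAB (sig_ (tau j), tau j)) as [_ [_ H]]. exact H. }
  assert (Hwp : forall n, dist (i (w n)) p < 2 * / INR (S (Nat.div2 n))).
  { intros n. unfold w. set (j := Nat.div2 n). destruct (Htau j) as [Hj1 Hj2].
    pose proof (invS_pos j). pose proof (invS_le _ _ Hj1).
    assert (Hu : dist (i (u j)) p < / INR (S j)) by exact Hj2.
    destruct (Nat.even n).
    - lra.
    - pose proof (HB _ _ _ (Huv j)). rewrite <- Hi in H1.
      pose proof (dist_tri _ (i (v j)) (i (u j)) p). rewrite dist_sym in H1. lra. }
  exists w, tau. split.
  - intros eps Heps. destruct (invS_small (eps/4)) as [K HK]. lra.
    exists (2*K)%nat. intros m n Hm1 Hn1.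
    assert (HmK : (K <= Nat.div2 m)%nat).
    { pose proof (Nat.div2_odd m). destruct (Nat.odd m); simpl in *; lia. }
    assert (HnK : (K <= Nat.div2 n)%nat).
    { pose proof (Nat.div2_odd n). destruct (Nat.odd n); simpl in *; lia. }
    pose proof (invS_le _ _ HmK). pose proof (invS_le _ _ HnK).
    pose proof (Hwp m). pose proof (Hwp n).
    rewrite <- Hi. pose proof (dist_tri _ (i (w m)) p (i (w n))).
    rewrite (dist_sym _ p) in H3. lra.
  - intros j. split. apply Htau.
    unfold w. rewrite Nat.even_mul. simpl (Nat.even 2). simpl orb.
    rewrite Nat.div2_double. rewrite Nat.even_succ, Nat.odd_mul. simpl (Nat.odd 2). simpl andb.
    rewrite Nat.div2_succ_double. apply Huv.
Qed.

Lemma dist_self (X : MetricSpace) (a : X) : dist a a = 0.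
Proof. apply dist_eq0. auto. Qed.

Lemma cauchy_bounded_tail (X : MetricSpace) (w : nat -> X) :
  cauchy_seq w -> exists N, forall n, (N <= n)%nat -> dist (w N) (w n) < 1.
Proof. intros H. destruct (H 1 Rlt_0_1) as [N HN]. exists N. intros n Hn. apply HN; lia. Qed.

Lemma P_SULB (X Xh : MetricSpace) (i : X -> Xh) :
  isometry i -> cofinally_BQ_complete Xh -> strongly_ULB X.
Proof.
  intros Hi HP. apply NNPP. intro Hn.
  assert (Hn' : forall d, 0 < d -> exists x : X, ~ bounded_set (chain_component x d)).
  { intros d Hd. apply NNPP. intro H'. apply Hn. exists d. split; auto. intro x.
    apply NNPP. intro H''. apply H'. exists x; auto. }
  destruct (Hn' 1 Rlt_0_1) as [xs _].
  destruct (GL X Xh i (fun t a b => a = b /\ INR t < dist xs a) Hi HP) as [w [tau [Hw Hb]]].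
  - intros t a b [-> _]. rewrite dist_self. apply invS_pos.
  - intros m. destruct (Hn' _ (invS_pos m)) as [xm Hxm]. exists xm. intros t.
    apply NNPP. intro H. apply Hxm. exists xs, (INR t). intros a Ha.
    apply Rnot_lt_le. intro Hlt. apply H. exists a, a. repeat split; auto.
  - destruct (cauchy_bounded_tail _ _ Hw) as [N HN].
    destruct (nat_gt (dist xs (w N) + 1)) as [n Hn1].
    set (j := Nat.max N n).
    assert (HjN : (N <= j)%nat) by apply Nat.le_max_l.
    assert (Hjn : (n <= j)%nat) by apply Nat.le_max_r.
    clearbody j.
    destruct (Hb j) as [Hj [_ Hj2]].
    assert (INR n <= INR (tau j)) by (apply le_INR; lia).
    pose proof (HN (2*j)%nat ltac:(lia)).
    pose proof (dist_tri _ xs (w N) (w (2*j)%nat)). lra.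
Qed.

Lemma P_SULL (X Xh Y : MetricSpace) (i : X -> Xh) (f : X -> Y) :
  isometry i -> cofinally_BQ_complete Xh -> cauchy_lipschitz f -> strongly_ULL f.
Proof.
  intros Hi HP Hf. apply NNPP. intro Hn.
  assert (Hn' : forall d, 0 < d -> exists x : X, ~ lipschitz_on f (chain_component x d)).
  { intros d Hd. apply NNPP. intro H'. apply Hn. exists d. split; auto. intro x.
    apply NNPP. intro H''. apply H'. exists x; auto. }
  destruct (Hn' 1 Rlt_0_1) as [xs _].
  destruct (GL X Xh i (fun t a b => dist a b < / INR (S t) /\
     (INR (S t) * dist a b < dist (f a) (f b) \/ INR t < dist (f a) (f xs))) Hi HP)
    as [w [tau [Hw Hb]]].
  - intros t a b [H _]. exact H.
  - intros m. destruct (Hn' _ (invS_pos m)) as [xm Hxm]. exists xm. intros t.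
    destruct (classic (exists B, forall a, chain (/ INR (S m)) xm a -> dist (f a) (f xs) <= B))
      as [[B HB]|HnB].
    + assert (HB0 : 0 <= B). { pose proof (HB xm (chain_refl _ _)). pose proof (dist_ge0 _ (f xm) (f xs)). lra. }
      set (K := (2*B+1) * INR (S t)).
      apply NNPP. intro H. apply Hxm. exists K. intros a b Ha Hb.
      apply Rnot_lt_le. intro Hlt. apply H. exists a, b. split; auto. split; auto.
      pose proof (HB a Ha). pose proof (HB b Hb).
      pose proof (dist_tri _ (f a) (f xs) (f b)). rewrite (dist_sym _ (f xs)) in H2.
      pose proof (dist_ge0 _ a b). pose proof (lt_0_INR (S t) ltac:(lia)).
      assert (Hd : INR (S t) * dist a b < 1).
      { unfold K in Hlt. nra. }
      split.
      * apply Rmult_lt_reg_l with (INR (S t)); auto. rewrite Rinv_r; lra.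
      * left. unfold K in Hlt. assert (0 <= INR (S t) * dist a b) by (apply Rmult_le_pos; lra).
        assert (0 <= B * (INR (S t) * dist a b)) by (apply Rmult_le_pos; lra). nra.
    + assert (Hu : exists a, chain (/ INR (S m)) xm a /\ INR t < dist (f a) (f xs)).
      { apply NNPP. intro H. apply HnB. exists (INR t). intros a Ha. apply Rnot_lt_le. intro Hlt.
        apply H. exists a. auto. }
      destruct Hu as [a [Ha Hat]]. exists a, a. repeat split; auto.
      rewrite dist_self. apply invS_pos.
  - destruct (Hf w Hw) as [K HK].
    destruct (cauchy_bounded_tail _ _ Hw) as [N HN].
    destruct (nat_gt (Rabs K + dist (f (w N)) (f xs) + 1)) as [n Hn1].
    set (j := Nat.max N n).
    assert (HjN : (N <= j)%nat) by apply Nat.le_max_l.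
    assert (Hjn : (n <= j)%nat) by apply Nat.le_max_r.
    clearbody j.
    destruct (Hb j) as [Hj [_ Hj2]].
    assert (INR n <= INR (tau j)) by (apply le_INR; lia).
    rewrite S_INR in Hj2.
    assert (Hr : forall k, exists n0, w k = w n0) by (intros k; exists k; auto).
    pose proof (HK _ _ (Hr (2*j)%nat) (Hr (S (2*j)))) as E1.
    pose proof (HK _ _ (Hr N) (Hr (2*j)%nat)) as E2.
    pose proof (HN (2*j)%nat ltac:(lia)) as E3.
    pose proof (dist_ge0 _ (w (2*j)%nat) (w (S (2*j)))) as E4.
    pose proof (dist_ge0 _ (w N) (w (2*j)%nat)) as E5.
    pose proof (dist_tri _ (f (w (2*j)%nat)) (f (w N)) (f xs)) as E6.
    pose proof (dist_sym _ (f (w (2*j)%nat)) (f (w N))) as E7.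
    pose proof (Rle_abs K). pose proof (Rabs_pos K).
    assert (K * dist (w N) (w (2*j)%nat) <= Rabs K) by nra.
    destruct Hj2 as [Hj2|Hj2].
    + pose proof (dist_ge0 _ (f (w N)) (f xs)).
      assert (0 <= (INR (tau j) + 1 - K) * dist (w (2*j)%nat) (w (S (2*j)))) by (apply Rmult_le_pos; lra).
      lra.
    + lra.
Qed.

Lemma P_approx (X Xh : MetricSpace) (i : X -> Xh) (g : X -> RealLine) (eps : R) :
  isometry i -> cofinally_BQ_complete Xh -> cauchy_continuous g -> 0 < eps ->
  exists d, 0 < d /\ forall x, exists k, 0 <= k /\ forall a b, chain d x a -> chain d x b ->
     Rabs (g a - g b) <= eps + k * dist a b.
Proof.
  intros Hi HP Hg He. change (X -> R) in g. apply NNPP. intro Hn.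
  assert (Hn' : forall d, 0 < d -> exists x : X, forall k, 0 <= k -> exists a b, chain d x a /\ chain d x b /\
     eps + k * dist a b < Rabs (g a - g b)).
  { intros d Hd. apply NNPP. intro H'. apply Hn. exists d. split; auto. intro x.
    apply NNPP. intro H''. apply H'. exists x. intros k Hk. apply NNPP. intro H3. apply H''.
    exists k. split; auto. intros a b Ha Hb. apply Rnot_lt_le. intro Hlt. apply H3. exists a, b. auto. }
  destruct (GL X Xh i (fun t a b => dist a b < / INR (S t) /\
     (eps < Rabs (g a - g b) \/ INR t < Rabs (g a))) Hi HP)
    as [w [tau [Hw Hb]]].
  - intros t a b [H _]. exact H.
  - intros m. destruct (Hn' _ (invS_pos m)) as [xm Hxm]. exists xm. intros t.
    destruct (classic (exists B, forall a, chain (/ INR (S m)) xm a -> Rabs (g a) <= B))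
      as [[B HB]|HnB].
    + assert (HB0 : 0 <= B). { pose proof (HB xm (chain_refl _ _)). pose proof (Rabs_pos (g xm)). lra. }
      pose proof (lt_0_INR (S t) ltac:(lia)).
      destruct (Hxm ((2*B+1) * INR (S t)) ltac:(nra)) as [a [b [Ha [Hb Hlt]]]].
      exists a, b. split; auto. split; auto.
      pose proof (HB a Ha). pose proof (HB b Hb).
      assert (Rabs (g a - g b) <= Rabs (g a) + Rabs (g b)) by (unfold Rminus; rewrite <- (Rabs_Ropp (g b)); apply Rabs_triang).
      pose proof (dist_ge0 _ a b).
      assert (Hd : INR (S t) * dist a b < 1) by nra.
      split.
      * apply Rmult_lt_reg_l with (INR (S t)); auto. rewrite Rinv_r; lra.
      * left. assert (0 <= INR (S t) * dist a b) by (apply Rmult_le_pos; lra).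
        assert (0 <= B * (INR (S t) * dist a b)) by (apply Rmult_le_pos; lra). nra.
    + assert (Hu : exists a, chain (/ INR (S m)) xm a /\ INR t < Rabs (g a)).
      { apply NNPP. intro H. apply HnB. exists (INR t). intros a Ha. apply Rnot_lt_le. intro Hlt.
        apply H. exists a. auto. }
      destruct Hu as [a [Ha Hat]]. exists a, a. repeat split; auto.
      rewrite dist_self. apply invS_pos.
  - pose proof (Hg w Hw) as Hgw.
    destruct (Hgw eps He) as [N1 HN1].
    destruct (Hgw 1 Rlt_0_1) as [N2 HN2].
    destruct (nat_gt (Rabs (g (w N2)) + 1)) as [n Hn1].
    set (j := Nat.max (Nat.max N1 N2) n).
    assert (HjN : (Nat.max N1 N2 <= j)%nat) by apply Nat.le_max_l.
    assert (Hjn : (n <= j)%nat) by apply Nat.le_max_r.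
    assert (HjN1 : (N1 <= j)%nat) by (pose proof (Nat.le_max_l N1 N2); lia).
    assert (HjN2 : (N2 <= j)%nat) by (pose proof (Nat.le_max_r N1 N2); lia).
    clearbody j.
    destruct (Hb j) as [Hj [_ Hj2]].
    assert (INR n <= INR (tau j)) by (apply le_INR; lia).
    pose proof (HN1 (2*j)%nat (S (2*j)) ltac:(lia) ltac:(lia)).
    pose proof (HN2 N2 (2*j)%nat ltac:(lia) ltac:(lia)).
    change (Rabs (g (w (2*j)%nat) - g (w (S (2*j)))) < eps) in H0.
    change (Rabs (g (w N2) - g (w (2*j)%nat)) < 1) in H1. rewrite Rabs_minus_sym in H1.
    pose proof (Rabs_triang (g (w N2)) (g (w (2*j)%nat) - g (w N2))).
    replace (g (w N2) + (g (w (2 * j)%nat) - g (w N2))) with (g (w (2*j)%nat)) in H2 by ring.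
    destruct Hj2 as [Hj2|Hj2]; lra.
Qed.

Lemma lip_sub (X Y : MetricSpace) (f : X -> Y) (A B : X -> Prop) :
  (forall a, B a -> A a) -> lipschitz_on f A -> lipschitz_on f B.
Proof. intros H [K HK]. exists K. intros a b Ha Hb. apply HK; auto. Qed.

Lemma add_point (X : MetricSpace) (f : X -> R) (A : X -> Prop) (c : X) (K L rho B : R) :
  0 < rho ->
  (forall a b, A a -> A b -> Rabs (f a - f b) <= K * dist a b) ->
  (forall b, A b -> dist c b < rho -> Rabs (f c - f b) <= L * dist c b) ->
  (forall b, A b -> Rabs (f c - f b) <= B) ->
  exists K', forall a b, (A a \/ a = c) -> (A b \/ b = c) -> Rabs (f a - f b) <= K' * dist a b.
Proof.
  intros Hr HK HL HB.
  set (K' := Rmax K (Rmax L (Rmax 0 B / rho))).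
  assert (H1 : K <= K') by apply Rmax_l.
  assert (H2 : L <= K') by (unfold K'; eapply Rle_trans; [apply (Rmax_l L)|apply Rmax_r]).
  assert (H3 : Rmax 0 B / rho <= K') by (unfold K'; eapply Rle_trans; [apply (Rmax_r L)|apply Rmax_r]).
  assert (Hc : forall b, A b -> Rabs (f c - f b) <= K' * dist c b).
  { intros b Hb. pose proof (dist_ge0 _ c b).
    destruct (Rlt_le_dec (dist c b) rho) as [Hlt|Hge].
    - pose proof (HL b Hb Hlt). assert (L * dist c b <= K' * dist c b) by (apply Rmult_le_compat_r; lra). lra.
    - pose proof (HB b Hb). pose proof (Rmax_r 0 B). pose proof (Rmax_l 0 B).
      assert (Rmax 0 B = (Rmax 0 B / rho) * rho) by (field; lra).
      assert ((Rmax 0 B / rho) * rho <= (Rmax 0 B / rho) * dist c b).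
      { apply Rmult_le_compat_l; auto. unfold Rdiv; apply Rmult_le_pos; [lra|left; apply Rinv_0_lt_compat; lra]. }
      assert ((Rmax 0 B / rho) * dist c b <= K' * dist c b) by (apply Rmult_le_compat_r; lra). lra. }
  exists K'. intros a b [Ha| ->] [Hb| ->].
  - pose proof (HK a b Ha Hb). pose proof (dist_ge0 _ a b).
    assert (K * dist a b <= K' * dist a b) by (apply Rmult_le_compat_r; lra). lra.
  - rewrite Rabs_minus_sym, dist_sym. apply Hc; auto.
  - apply Hc; auto.
  - rewrite Rminus_diag, Rabs_R0, dist_self. lra.
Qed.

Lemma cauchy_bounded (X : MetricSpace) (x : nat -> X) :
  cauchy_seq x -> exists R, forall j k, dist (x j) (x k) <= R.
Proof.
  intros H. destruct (H 1 Rlt_0_1) as [N HN].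
  assert (Hf : forall n, exists R, forall k, (k <= n)%nat -> dist (x 0%nat) (x k) <= R).
  { induction n as [|n [R HR]].
    - exists 0. intros k Hk. assert (k = 0%nat) by lia. subst. rewrite dist_self. lra.
    - exists (Rmax R (dist (x 0%nat) (x (S n)))). intros k Hk.
      destruct (Nat.eq_dec k (S n)) as [->|Hne]. apply Rmax_r.
      eapply Rle_trans; [apply HR; lia|apply Rmax_l]. }
  destruct (Hf N) as [R HR].
  assert (H0 : forall k, dist (x 0%nat) (x k) <= R + 1).
  { intros k. destruct (le_lt_dec k N) as [Hk|Hk]. pose proof (HR k Hk). lra.
    pose proof (HR N (le_n _)). pose proof (HN N k (le_n _) ltac:(lia)).
    pose proof (dist_tri _ (x 0%nat) (x N) (x k)). lra. }
  exists (2 * (R + 1)). intros j k. pose proof (H0 j). pose proof (H0 k).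
  pose proof (dist_tri _ (x j) (x 0%nat) (x k)). pose proof (dist_sym _ (x j) (x 0%nat)). lra.
Qed.

Lemma loclip_CL (X Xh : MetricSpace) (i : X -> Xh) (F : Xh -> R) :
  complete Xh -> isometry i ->
  (forall q, exists rho L, 0 < rho /\ forall a b, dist a q < rho -> dist b q < rho ->
       Rabs (F a - F b) <= L * dist a b) ->
  @cauchy_lipschitz X RealLine (fun x => F (i x)).
Proof.
  intros Hc Hi Hloc x Hx.
  destruct (Hc (fun n => i (x n))) as [p Hp].
  { intros e He. destruct (Hx e He) as [N HN]. exists N. intros m n Hm Hn. rewrite Hi. auto. }
  destruct (Hloc p) as [rho [L [Hrho HL]]].
  destruct (Hp rho Hrho) as [N HN].
  destruct (cauchy_bounded _ _ Hx) as [R HR].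
  set (A := fun m a => exists n, (m <= n)%nat /\ a = x n).
  assert (HA : forall k, exists K, forall a b, A (N - k)%nat a -> A (N - k)%nat b ->
                 Rabs (F (i a) - F (i b)) <= K * dist a b).
  { induction k as [|k [K HK]].
    - exists L. intros a b [n [Hn ->]] [n' [Hn' ->]]. rewrite <- Hi. apply HL; apply HN; lia.
    - destruct (le_lt_dec N k) as [Hk|Hk].
      + exists K. replace (N - S k)%nat with (N - k)%nat by lia. auto.
      + set (m := (N - S k)%nat). assert (Hm : (N - k)%nat = S m) by (unfold m; lia).
        rewrite Hm in HK.
        destruct (Hloc (i (x m))) as [rc [Lc [Hrc HLc]]].
        destruct (add_point X (fun a => F (i a)) (A (S m)) (x m) K Lc rc
                   (Rabs (F (i (x m)) - F (i (x (S m)))) + Rabs K * R)) as [K' HK'].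
        * auto.
        * auto.
        * intros b _ Hb. rewrite <- Hi. apply HLc. rewrite dist_self; auto. rewrite dist_sym, Hi; auto.
        * intros b Hb. pose proof (HK (x (S m)) b ltac:(exists (S m); split; auto) Hb).
          destruct Hb as [n [_ ->]]. pose proof (HR (S m) n). pose proof (dist_ge0 _ (x (S m)) (x n)).
          pose proof (Rle_abs K). pose proof (Rabs_pos K).
          assert (K * dist (x (S m)) (x n) <= Rabs K * R) by nra.
          pose proof (Rabs_triang (F (i (x m)) - F (i (x (S m)))) (F (i (x (S m))) - F (i (x n)))).
          replace (F (i (x m)) - F (i (x (S m))) + (F (i (x (S m))) - F (i (x n)))) with
            (F (i (x m)) - F (i (x n))) in H5 by ring. lra.
        * exists K'. intros a b Ha Hb. apply HK'.
          -- destruct Ha as [n [Hn ->]]. destruct (Nat.eq_dec n m) as [->|Hne]. right; auto.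
             left. exists n. split; auto. lia.
          -- destruct Hb as [n [Hn ->]]. destruct (Nat.eq_dec n m) as [->|Hne]. right; auto.
             left. exists n. split; auto. lia. }
  destruct (HA N) as [K HK]. exists K. intros a b [n ->] [n' ->].
  change (Rabs (F (i (x n)) - F (i (x n'))) <= K * dist (x n) (x n')).
  apply HK; [exists n|exists n']; split; auto; lia.
Qed.

Fixpoint maxupto (h : nat -> R) (M : nat) : R :=
  match M with 0%nat => h 0%nat | S M' => Rmax (maxupto h M') (h (S M')) end.

Lemma maxupto_ge (h : nat -> R) M n : (n <= M)%nat -> h n <= maxupto h M.
Proof.
  induction M as [|M IH]; intros Hn; simpl.
  - assert (n = 0%nat) by lia. subst. lra.
  - destruct (Nat.eq_dec n (S M)) as [->|Hne]. apply Rmax_r.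
    eapply Rle_trans; [apply IH; lia|apply Rmax_l].
Qed.

Lemma maxupto_nonneg (h : nat -> R) M : (forall n, 0 <= h n) -> 0 <= maxupto h M.
Proof. intros H. eapply Rle_trans; [apply (H 0%nat)|apply maxupto_ge; lia]. Qed.

Lemma maxupto_stable (h : nat -> R) M M' : (forall n, 0 <= h n) -> (forall n, (M < n)%nat -> h n = 0) ->
  (M <= M')%nat -> maxupto h M' = maxupto h M.
Proof.
  intros H0 Hz Hle. induction Hle as [|M' Hle IH]. auto.
  simpl. rewrite Hz by lia. rewrite IH. apply Rmax_left. apply maxupto_nonneg; auto.
Qed.

Lemma Rmax_lip a b c d e : Rabs (a - c) <= e -> Rabs (b - d) <= e -> Rabs (Rmax a b - Rmax c d) <= e.
Proof.
  intros H1 H2. unfold Rmax. destruct (Rle_dec a b); destruct (Rle_dec c d);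
  revert H1 H2; unfold Rabs; repeat destruct Rcase_abs; intros; lra.
Qed.

Lemma maxupto_lip (h1 h2 : nat -> R) M e : (forall n, (n <= M)%nat -> Rabs (h1 n - h2 n) <= e) ->
  Rabs (maxupto h1 M - maxupto h2 M) <= e.
Proof.
  induction M as [|M IH]; intros H; simpl. apply H; lia.
  apply Rmax_lip. apply IH; intros; apply H; lia. apply H; lia.
Qed.

Lemma no_cluster (Xh : MetricSpace) :
  ~ cofinally_BQ_complete Xh ->
  exists z : nat -> Xh, cofinally_BQC z /\ forall q, exists e m, 0 < e /\ forall n, (m <= n)%nat -> e <= dist (z n) q.
Proof.
  intros H. apply NNPP. intro H1. apply H. intros z Hz. apply NNPP. intro H2. apply H1.
  exists z. split; auto. intros q. apply NNPP. intro H3. apply H2. exists q.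
  intros e He m. apply NNPP. intro H4. apply H3. exists e, m. split; auto.
  intros n Hn. apply Rnot_lt_le. intro Hlt. apply H4. exists n. auto.
Qed.

Lemma NC (X Xh : MetricSpace) (i : X -> Xh) :
  is_completion i -> ~ cofinally_BQ_complete Xh ->
  exists f : X -> RealLine, cauchy_lipschitz f /\
    forall d, 0 < d -> exists x0 : X, forall M, exists a, chain d x0 a /\ M < f a.
Proof.
  intros [Hc [Hi Hd]] HnP.
  destruct (no_cluster Xh HnP) as [z [Hz Hnc]].
  set (phi := fun n q => INR n * Rmax 0 (1 - INR (S n) * dist q (z n))).
  assert (Hphi0 : forall n q, 0 <= phi n q).
  { intros n q. unfold phi. apply Rmult_le_pos. apply pos_INR. apply Rmax_l. }
  assert (Hphiz : forall n q, / INR (S n) <= dist q (z n) -> phi n q = 0).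
  { intros n q Hq. unfold phi. pose proof (lt_0_INR (S n) ltac:(lia)).
    assert (1 <= INR (S n) * dist q (z n)).
    { apply Rmult_le_compat_l with (r := INR (S n)) in Hq; [|lra]. rewrite Rinv_r in Hq; lra. }
    rewrite Rmax_left by lra. ring. }
  assert (Hphil : forall n q q', Rabs (phi n q - phi n q') <= INR n * INR (S n) * dist q q').
  { intros n q q'. unfold phi. rewrite <- Rmult_minus_distr_l, Rabs_mult, Rabs_right by (apply Rle_ge, pos_INR).
    rewrite Rmult_assoc. apply Rmult_le_compat_l. apply pos_INR.
    pose proof (lt_0_INR (S n) ltac:(lia)).
    assert (Rabs (dist q (z n) - dist q' (z n)) <= dist q q').
    { pose proof (dist_tri _ q q' (z n)). pose proof (dist_tri _ q' q (z n)). rewrite (dist_sym _ q' q) in H1.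
      unfold Rabs; destruct Rcase_abs; lra. }
    apply Rmax_lip. rewrite Rminus_diag, Rabs_R0. apply Rmult_le_pos; [lra|apply dist_ge0].
    replace (1 - INR (S n) * dist q (z n) - (1 - INR (S n) * dist q' (z n))) with
      (INR (S n) * - (dist q (z n) - dist q' (z n))) by ring.
    rewrite Rabs_mult, Rabs_Ropp, Rabs_right by lra. apply Rmult_le_compat_l; lra. }
  assert (Hloc : forall q, exists rho M, 0 < rho /\ forall q', dist q' q < rho -> forall n, (M < n)%nat -> phi n q' = 0).
  { intros q. destruct (Hnc q) as [e [m0 [He Hm0]]].
    destruct (invS_small (e/2)) as [K0 HK0]. lra.
    exists (e/2), (Nat.max m0 K0). split. lra. intros q' Hq' n Hn. apply Hphiz.
    pose proof (Hm0 n ltac:(pose proof (Nat.le_max_l m0 K0); lia)).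
    pose proof (invS_le K0 n ltac:(pose proof (Nat.le_max_r m0 K0); lia)).
    pose proof (dist_tri _ (z n) q' q). rewrite (dist_sym _ (z n) q') in H1. lra. }
  assert (Hex : forall q, exists M, forall n, (M < n)%nat -> phi n q = 0).
  { intros q. destruct (Hloc q) as [rho [M [Hr HM]]]. exists M. apply HM. rewrite dist_self; auto. }
  destruct (functional_choice _ Hex) as [Mc HMc].
  set (F := fun q => maxupto (fun n => phi n q) (Mc q)).
  assert (HFge : forall n q, phi n q <= F q).
  { intros n q. unfold F. destruct (le_lt_dec n (Mc q)) as [Hn|Hn].
    apply (maxupto_ge (fun n => phi n q)); auto. rewrite HMc by auto. apply maxupto_nonneg. auto. }
  exists (fun x => F (i x)). split.
  - apply loclip_CL; auto. intros q. destruct (Hloc q) as [rho [M [Hr HM]]].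
    exists rho, (INR M * INR (S M)). split; auto. intros a b Ha Hb.
    assert (HFM : forall c, dist c q < rho -> F c = maxupto (fun n => phi n c) M).
    { intros c Hcq. unfold F.
      rewrite <- (maxupto_stable (fun n => phi n c) (Mc c) (Nat.max (Mc c) M)); auto; [|apply Nat.le_max_l].
      apply maxupto_stable; auto. apply Nat.le_max_r. }
    rewrite (HFM a Ha), (HFM b Hb). apply maxupto_lip. intros n Hn.
    eapply Rle_trans. apply Hphil. apply Rmult_le_compat_r. apply dist_ge0.
    apply Rmult_le_compat. apply pos_INR. apply pos_INR. apply le_INR; lia. apply le_INR; lia.
  - intros d Hdp. destruct (Hz d Hdp) as [N [HNinf HN]].
    destruct (HNinf 0%nat) as [n0 [_ Hn0]].
    destruct (Hd (z n0) d Hdp) as [x0 Hx0].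
    exists x0. intros M.
    destruct (nat_gt (2 * M + 2)) as [m Hm].
    destruct (HNinf m) as [n [Hmn Hn]].
    assert (Hch : chain d (i x0) (z n)).
    { eapply chain_step. exact Hx0. apply HN; auto. }
    destruct (chain_pull X Xh i d Hdp Hd Hi _ _ Hch) as [eta [Heta Hpull]].
    pose proof (lt_0_INR (S n) ltac:(lia)).
    set (s := Rmin eta (/ INR (S n) / 2)).
    assert (Hs : 0 < s). { unfold s. apply Rmin_glb_lt. auto. pose proof (invS_pos n). lra. }
    destruct (Hd (z n) s Hs) as [a Ha].
    exists a. split.
    + apply Hpull. rewrite dist_self; auto. pose proof (Rmin_l eta (/ INR (S n) / 2)). fold s in H0. lra.
    + pose proof (HFge n (i a)). cbv beta.
      assert (Hda : INR (S n) * dist (i a) (z n) <= 1/2).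
      { pose proof (Rmin_r eta (/ INR (S n) / 2)). fold s in H1.
        assert (dist (i a) (z n) <= / INR (S n) / 2) by lra.
        apply Rmult_le_compat_l with (r := INR (S n)) in H2; [|lra].
        replace (INR (S n) * (/ INR (S n) / 2)) with (1/2) in H2 by (field; lra). lra. }
      assert (phi n (i a) >= INR n * (1/2)).
      { unfold phi. apply Rle_ge. apply Rmult_le_compat_l. apply pos_INR.
        eapply Rle_trans; [|apply Rmax_r]. lra. }
      pose proof (le_INR _ _ Hmn). lra.
Qed.

Lemma sull_bounded (X : MetricSpace) (h : X -> RealLine) :
  strongly_ULB X -> strongly_ULL h ->
  exists d, 0 < d /\ forall x0 : X, exists M, forall a, chain d x0 a -> h a <= M.
Proof.
  intros [d0 [Hd0 HB]] [d1 [Hd1 HL]].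
  exists (Rmin d0 d1). split. apply Rmin_glb_lt; auto.
  intros x0. destruct (HB x0) as [c [R HR]]. destruct (HL x0) as [K HK].
  exists (h x0 + Rabs K * (2 * R)). intros a Ha.
  assert (Ha0 : chain d0 x0 a) by (eapply chain_mono; [apply Rmin_l|eauto]).
  assert (Ha1 : chain d1 x0 a) by (eapply chain_mono; [apply Rmin_r|eauto]).
  pose proof (HK a x0 Ha1 (chain_refl _ _)) as E1. change (Rabs (h a - h x0) <= K * dist a x0) in E1.
  pose proof (HR a Ha0). pose proof (HR x0 (chain_refl _ _)).
  pose proof (dist_tri _ a c x0). pose proof (dist_sym _ a c). pose proof (dist_ge0 _ a x0).
  pose proof (Rle_abs K). pose proof (Rabs_pos K).
  assert (K * dist a x0 <= Rabs K * (2 * R)) by nra.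
  pose proof (Rle_abs (h a - h x0)). lra.
Qed.

Lemma CL_CC (X Y : MetricSpace) (f : X -> Y) : cauchy_lipschitz f -> cauchy_continuous f.
Proof.
  intros Hf x Hx eps He. destruct (Hf x Hx) as [K HK].
  pose proof (Rabs_pos K).
  destruct (Hx (eps / (Rabs K + 1))) as [N HN]. apply Rdiv_lt_0_compat; lra.
  exists N. intros m n Hm Hn. pose proof (HN m n Hm Hn).
  pose proof (HK (x m) (x n) ltac:(exists m; auto) ltac:(exists n; auto)).
  pose proof (dist_ge0 _ (x m) (x n)). pose proof (Rle_abs K).
  assert (Rabs K * dist (x m) (x n) <= Rabs K * (eps / (Rabs K + 1))) by (apply Rmult_le_compat_l; lra).
  assert (Rabs K * (eps / (Rabs K + 1)) < eps).
  { apply Rmult_lt_reg_r with (Rabs K + 1). lra. field_simplify; lra. }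
  nra.
Qed.

Lemma comp_iff (X : MetricSpace) d (x a : X) : chain d x a -> forall y, chain d a y <-> chain d x y.
Proof.
  intros H y. split; intro H'. eapply chain_trans; eauto. eapply chain_trans; [apply chain_sym; eauto|eauto].
Qed.

Lemma comp_eq (X : MetricSpace) d (x a : X) : chain d x a -> chain_component a d = chain_component x d.
Proof.
  intros H. apply functional_extensionality. intros y. apply propositional_extensionality.
  apply comp_iff; auto.
Qed.

Lemma inf_ex (E : R -> Prop) (L : R) : (forall e, E e -> L <= e) -> (exists e, E e) ->
  exists m, (forall e, E e -> m <= e) /\ (forall L', (forall e, E e -> L' <= e) -> L' <= m).
Proof.
  intros HL [e0 He0].
  destruct (completeness (fun v => E (- v))) as [s [Hs1 Hs2]].
  - exists (- L). intros v Hv. pose proof (HL _ Hv). lra.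
  - exists (- e0). rewrite Ropp_involutive. auto.
  - exists (- s). split.
    + intros e He. assert (- e <= s). { apply Hs1. rewrite Ropp_involutive. auto. } lra.
    + intros L' HL'. assert (s <= - L'). { apply Hs2. intros v Hv. pose proof (HL' _ Hv). lra. } lra.
Qed.

Lemma P_dense (X Xh : MetricSpace) (i : X -> Xh) :
  isometry i -> cofinally_BQ_complete Xh -> SULL_uniformly_dense_in_CC X.
Proof.
  intros Hi HP g Hg eps He.
  destruct (P_approx X Xh i g eps Hi HP Hg He) as [d [Hd Hk]].
  change (X -> R) in g.
  assert (HKC : forall C : X -> Prop, exists k, 0 <= k /\ ((exists x, C = chain_component x d) ->
      forall a b, C a -> C b -> Rabs (g a - g b) <= eps + k * dist a b)).
  { intros C. destruct (classic (exists x, C = chain_component x d)) as [[x ->]|Hn].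
    - destruct (Hk x) as [k [Hk0 Hk1]]. exists k. split; auto.
    - exists 0. split. lra. intros H. contradiction. }
  destruct (functional_choice _ HKC) as [Kf HKf].
  set (E := fun x v => exists y, chain d x y /\ v = g y + Kf (chain_component x d) * dist x y).
  assert (Hinf : forall x, exists m, (forall e, E x e -> m <= e) /\ (forall L', (forall e, E x e -> L' <= e) -> L' <= m)).
  { intros x. apply inf_ex with (g x - eps).
    - intros e [y [Hy ->]]. destruct (HKf (chain_component x d)) as [Hk0 Hk1].
      pose proof (Hk1 ltac:(exists x; auto) x y (chain_refl _ _) Hy).
      pose proof (Rle_abs (g x - g y)). lra.
    - exists (g x + Kf (chain_component x d) * dist x x). exists x. split; auto. constructor. }
  destruct (functional_choice _ Hinf) as [h Hh].
  exists h. split.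
  - exists d. split; auto. intros x0. exists (Kf (chain_component x0 d)).
    assert (Hone : forall a b, chain d x0 a -> chain d x0 b -> h b <= h a + Kf (chain_component x0 d) * dist a b).
    { intros a b Ha Hb.
      assert (Ea : chain_component a d = chain_component x0 d) by (apply comp_eq; auto).
      assert (Eb : chain_component b d = chain_component x0 d) by (apply comp_eq; auto).
      assert (h b - Kf (chain_component x0 d) * dist a b <= h a).
      { apply (proj2 (Hh a)). intros e [y [Hy ->]].
        assert (Hyb : chain d b y).
        { apply (comp_iff X d x0 b Hb). apply (comp_iff X d x0 a Ha). auto. }
        pose proof (proj1 (Hh b) (g y + Kf (chain_component b d) * dist b y) ltac:(exists y; auto)).
        rewrite Ea. rewrite Eb in H.
        destruct (HKf (chain_component x0 d)) as [Hk0 _].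
        pose proof (dist_tri _ b a y). rewrite (dist_sym _ b a) in H0.
        assert (Kf (chain_component x0 d) * dist b y <= Kf (chain_component x0 d) * (dist a b + dist a y))
          by (apply Rmult_le_compat_l; lra).
        lra. }
      lra. }
    intros a b Ha Hb. change (Rabs (h a - h b) <= Kf (chain_component x0 d) * dist a b).
    pose proof (Hone a b Ha Hb). pose proof (Hone b a Hb Ha). rewrite dist_sym in H0.
    unfold Rabs; destruct Rcase_abs; lra.
  - intros x. change (Rabs (h x - g x) <= eps).
    assert (h x <= g x).
    { pose proof (proj1 (Hh x) (g x + Kf (chain_component x d) * dist x x) ltac:(exists x; split; auto; constructor)).
      rewrite dist_self, Rmult_0_r, Rplus_0_r in H. auto. }
    assert (g x - eps <= h x).
    { apply (proj2 (Hh x)). intros e [y [Hy ->]]. destruct (HKf (chain_component x d)) as [Hk0 Hk1].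
      pose proof (Hk1 ltac:(exists x; auto) x y (chain_refl _ _) Hy).
      pose proof (Rle_abs (g x - g y)). lra. }
    unfold Rabs; destruct Rcase_abs; lra.
Qed.

Lemma notP_contra (X Xh : MetricSpace) (i : X -> Xh) (h : X -> RealLine) :
  is_completion i -> strongly_ULB X -> ~ cofinally_BQ_complete Xh ->
  forall f : X -> RealLine, (forall d, 0 < d -> exists x0 : X, forall M, exists a, chain d x0 a /\ M < f a) ->
  strongly_ULL h -> (forall x, f x <= h x + 1) -> False.
Proof.
  intros Hc HB HnP f Hf Hh Hfh.
  destruct (sull_bounded X h HB Hh) as [d [Hd Hb]].
  destruct (Hf d Hd) as [x0 Hx0]. destruct (Hb x0) as [M HM].
  destruct (Hx0 (M + 1)) as [a [Ha Hlt]]. pose proof (HM a Ha). pose proof (Hfh a).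
  change (h a <= M) in H. change (M + 1 < f a) in Hlt. change (f a <= h a + 1) in H0. lra.
Qed.

Theorem mainTheorem2 (X Xh : MetricSpace) (i : X -> Xh) :
  is_completion i ->
  (cofinally_BQ_complete Xh <->
     (strongly_ULB X /\
      forall (Y : MetricSpace) (f : X -> Y), cauchy_lipschitz f -> strongly_ULL f)) /\
  (cofinally_BQ_complete Xh <->
     (strongly_ULB X /\
      forall f : X -> RealLine, cauchy_lipschitz f -> strongly_ULL f)) /\
  (cofinally_BQ_complete Xh <->
     (strongly_ULB X /\ SULL_uniformly_dense_in_CC X)).
Proof.
  intros Hc. pose proof Hc as [_ [Hi _]].
  assert (BP : strongly_ULB X -> (forall f : X -> RealLine, cauchy_lipschitz f -> strongly_ULL f) ->
               cofinally_BQ_complete Xh).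
  { intros HB Hall. apply NNPP. intro HnP.
    destruct (NC X Xh i Hc HnP) as [f [Hf Hunb]].
    apply (notP_contra X Xh i f Hc HB HnP f Hunb (Hall f Hf)). intros x; lra. }
  split; [|split].
  - split.
    + intros HP. split. apply (P_SULB X Xh i Hi HP). intros Y f Hf. apply (P_SULL X Xh Y i f Hi HP Hf).
    + intros [HB Hall]. apply BP; auto.
  - split.
    + intros HP. split. apply (P_SULB X Xh i Hi HP). intros f Hf. apply (P_SULL X Xh RealLine i f Hi HP Hf).
    + intros [HB Hall]. apply BP; auto.
  - split.
    + intros HP. split. apply (P_SULB X Xh i Hi HP). apply (P_dense X Xh i Hi HP).
    + intros [HB Hden]. apply NNPP. intro HnP.
      destruct (NC X Xh i Hc HnP) as [f [Hf Hunb]].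
      destruct (Hden f (CL_CC X RealLine f Hf) 1 Rlt_0_1) as [h [Hh Happ]].
      apply (notP_contra X Xh i h Hc HB HnP f Hunb Hh).
      intros x. pose proof (Happ x). change (Rabs (h x - f x) <= 1) in H.
      rewrite Rabs_minus_sym in H. pose proof (Rle_abs (f x - h x)). change (f x <= h x + 1). lra.
Qed.
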